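(* Let $\{a_n\}_{n\ge 0}$ be a real-valued sequence with $\{a_n\}\in GMS$. If the series $\sum_{n=0}^\infty a_n$ converges, then $n a_n\to 0$ as $n\to\infty$.
   Context: A complex sequence $\{a_n\}_{n\ge0}$ tending to $0$ is general monotone, written $\{a_n\}\in GMS$, if there exist constants $C>1$ and $\lambda>1$ such that for every $n\in\mathbb{N}$, $$\sum_{k=n}^{2n}|a_k-a_{k+1}|\le C\sum_{n/\lambda\le k\le\lambda n}\frac{|a_k|}{k}.$$ *)

(* Defs.v *)
From HB Require Import structures.
From mathcomp Require Import all_boot all_order all_algebra.
From mathcomp Require Import all_classical all_reals all_analysis.
Set Implicit Arguments. Unset Strict Implicit. Unset Printing Implicit Defensive.
Import Order.TTheory GRing.Theory Num.Theory.
Import numFieldNormedType.Exports.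
Local Open Scope classical_set_scope.
Local Open Scope ring_scope.

Definition GMS (R : realType) (a : R ^nat) : Prop :=
  a @ \oo --> (0 : R) /\
  exists (C lam : R), 1 < C /\ 1 < lam /\
    forall n : nat, (0 < n)%N ->
      \sum_(n <= k < (2 * n).+1) `|a k - a k.+1|
      <= C * \sum_(0 <= k < (Num.truncn (lam * n%:R)).+1
                   | (n%:R / lam <= k%:R) && (k%:R <= lam * n%:R))
               (`|a k| / k%:R).

(* Main.v *)
Require Import Defs.
From HB Require Import structures.
From mathcomp Require Import all_boot all_order all_algebra.
From mathcomp Require Import all_classical all_reals all_analysis.
From mathcomp Require Import zify ring lra.
Import Order.TTheory GRing.Theory Num.Theory.
Import numFieldNormedType.Exports.
Local Open Scope classical_set_scope.
Local Open Scope ring_scope.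
Set Implicit Arguments. Unset Strict Implicit.

Lemma sum_mono (R : realType) (f : nat -> R) (p q p' q' : nat) :
  (forall i, 0 <= f i) -> (p <= p')%N -> (q' <= q)%N ->
  \sum_(p' <= i < q') f i <= \sum_(p <= i < q) f i.
Proof.
move=> f0 hp hq.
case: (leqP q' p') => h.
  by rewrite big_geq // sumr_ge0.
rewrite (big_cat_nat hp (_ : (p' <= q)%N)); last by lia.
rewrite (big_cat_nat (_ : (p' <= q')%N) hq); last by lia.
rewrite /= addrCA lerDl.
by rewrite addr_ge0 // sumr_ge0.
Qed.

Definition DV (R : realType) (a : R ^nat) p q := \sum_(p <= i < q) `|a i - a i.+1|.
Definition UU (R : realType) (a : R ^nat) p q := \sum_(p <= i < q) `|a i|.
Arguments DV {R}. Arguments UU {R}.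

Lemma DV_ge0 (R : realType) (a : R ^nat) p q : 0 <= DV a p q.
Proof. by rewrite sumr_ge0. Qed.
Lemma UU_ge0 (R : realType) (a : R ^nat) p q : 0 <= UU a p q.
Proof. by rewrite sumr_ge0. Qed.

Lemma DV_mono (R : realType) (a : R ^nat) p q p' q' :
  (p <= p')%N -> (q' <= q)%N -> DV a p' q' <= DV a p q.
Proof. by move=> *; apply: sum_mono. Qed.
Lemma UU_mono (R : realType) (a : R ^nat) p q p' q' :
  (p <= p')%N -> (q' <= q)%N -> UU a p' q' <= UU a p q.
Proof. by move=> *; apply: sum_mono. Qed.

Lemma DV_split (R : realType) (a : R ^nat) p m q :
  (p <= m)%N -> (m <= q)%N -> DV a p q = DV a p m + DV a m q.
Proof. by move=> h1 h2; rewrite /DV (big_cat_nat h1 h2). Qed.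
Lemma UU_split (R : realType) (a : R ^nat) p m q :
  (p <= m)%N -> (m <= q)%N -> UU a p q = UU a p m + UU a m q.
Proof. by move=> h1 h2; rewrite /UU (big_cat_nat h1 h2). Qed.

Lemma tele (R : realType) (a : R ^nat) m t : `|a (m + t)%N - a m| <= DV a m (m + t)%N.
Proof.
elim: t => [|t IH]; first by rewrite addn0 subrr normr0 DV_ge0.
rewrite addnS /DV big_nat_recr /=; last by lia.
rewrite -/(DV a m (m + t)%N).
have -> : a (m + t).+1 - a m = (a (m + t)%N - a m) - (a (m+t)%N - a (m + t).+1) by ring.
apply: (le_trans (ler_normB _ _)); exact: lerD.
Qed.

Lemma ptwise (R : realType) (a : R ^nat) m L : (0 < L)%N ->
  L%:R * `|a m| <= `|\sum_(m <= k < m + L) a k| + L%:R * DV a m (m + L)%N.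
Proof.
move=> L0.
have E : L%:R * a m = \sum_(m <= k < m + L) a k - \sum_(m <= k < m + L) (a k - a m).
  rewrite sumrB sumr_const_nat.
  have -> : (m + L - m = L)%N by lia.
  by rewrite mulr_natl; ring.
have -> : L%:R * `|a m| = `|L%:R * a m| by rewrite normrM normr_nat.
rewrite E.
apply: (le_trans (ler_normB _ _)); apply: lerD => //.
apply: (le_trans (ler_norm_sum _ _ _)).
rewrite -[L in L%:R * _](_ : (m + L - m = L)%N); last by lia.
rewrite mulr_natl -sumr_const_nat; apply: ler_sum_nat => k /andP[h1 h2].
have -> : k = (m + (k - m))%N by lia.
apply: le_trans (tele a m (k - m)) _; apply: DV_mono => //; lia.
Qed.

Lemma sumw (R : realType) (a : R ^nat) p M L :
  \sum_(p <= m < p + M) DV a m (m + L)%N <= L%:R * DV a p (p + M + L)%N.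
Proof.
elim: L => [|L IH].
  rewrite mul0r; apply: le_trans (_ : \sum_(p <= m < p + M) (0:R) <= 0).
    by apply: ler_sum_nat => m _; rewrite addn0 /DV big_geq.
  by rewrite big1.
have -> : \sum_(p <= m < p + M) DV a m (m + L.+1)%N =
   \sum_(p <= m < p + M) DV a m (m + L)%N + \sum_(p <= m < p + M) `|a (m + L)%N - a (m+L).+1|.
  rewrite -big_split; apply: eq_bigr => m _ /=.
  by rewrite addnS /DV big_nat_recr //=; lia.
rewrite -addn1 natrD mulrDl mul1r; apply: lerD.
  apply: (le_trans IH); apply: ler_wpM2l => //; apply: DV_mono; lia.
have -> : \sum_(p <= m < p + M) `|a (m + L)%N - a (m + L).+1| = DV a (p + L) (p + M + L)%N.
  rewrite /DV big_addn.
  by have -> : (p + M + L - L = p + M)%N by lia.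
apply: DV_mono; lia.
Qed.

Lemma block (R : realType) (a : R ^nat) (eps : R) p M L : (0 < L)%N ->
  (forall m, (p <= m)%N -> `|\sum_(m <= k < m + L) a k| <= eps) ->
  UU a p (p + M) <= M%:R * eps / L%:R + L%:R * DV a p (p + M + L)%N.
Proof.
move=> L0 hc.
have L0' : (0 : R) < L%:R by rewrite ltr0n.
apply: le_trans (_ : \sum_(p <= m < p + M) (eps / L%:R + DV a m (m + L)%N) <= _).
  apply: ler_sum_nat => m /andP[h1 h2].
  have := ptwise a m L0.
  have := hc m h1.
  move: (`|\sum_(m <= k < m + L) a k|) => S hS h.
  rewrite -(ler_pM2l L0') mulrDr mulrCA divff ?mulr1; last by rewrite gt_eqF.
  apply: (le_trans h); rewrite lerD2r //.
rewrite big_split /= sumr_const_nat.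
have -> : (p + M - p = M)%N by lia.
apply: lerD; last exact: sumw.
by rewrite -mulrA mulr_natl.
Qed.

Definition ud (R : realType) (a : R ^nat) j := UU a (2 ^ j)%N (2 ^ j.+1)%N.

Lemma UU_dyadic (R : realType) (a : R ^nat) p t :
  UU a (2 ^ p)%N (2 ^ (p + t))%N = \sum_(p <= i < p + t) ud a i.
Proof.
elim: t => [|t IH]; first by rewrite addn0 /UU !big_geq.
rewrite addnS (UU_split a (_ : (2 ^ p <= 2 ^ (p + t))%N)); last first.
- by rewrite leq_exp2l //; lia.
- by rewrite leq_exp2l //; lia.
by rewrite IH big_nat_recr /=; [|lia].
Qed.

Lemma gm_bound (R : realType) (a : R ^nat) (lam : R) (n j r : nat) :
  (r <= j)%N -> (2 ^ j <= n)%N -> (n < 2 ^ j.+1)%N -> 0 < lam -> lam <= (2 ^ r)%:R ->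
  \sum_(0 <= k < (Num.truncn (lam * n%:R)).+1
                   | (n%:R / lam <= k%:R) && (k%:R <= lam * n%:R))
               (`|a k| / k%:R)
  <= lam / n%:R * UU a (2 ^ (j - r))%N (2 ^ (j + r + 1))%N.
Proof.
move=> rj jn nj l0 lr.
have n0 : (0 < n)%N by apply: leq_trans jn; rewrite expn_gt0.
have n0' : (0 : R) < n%:R by rewrite ltr0n.
set T := (Num.truncn _).+1.
set X := (T + 2 ^ (j + r + 1))%N.
rewrite big_mkcond /=.
pose g k := if (2 ^ (j - r) <= k < 2 ^ (j + r + 1))%N then lam / n%:R * `|a k| else 0.
apply: le_trans (_ : \sum_(0 <= k < X) g k <= _).
  apply: le_trans (_ : \sum_(0 <= k < X) (if (n%:R / lam <= k%:R) && (k%:R <= lam * n%:R) then `|a k| / k%:R else 0) <= _).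
    apply: sum_mono => //; last by lia.
    by move=> i; case: ifP => // _; rewrite divr_ge0.
  apply: ler_sum_nat => k _; rewrite /g.
  case: ifP => [/andP[hk1 hk2]|]; last first.
    by move=> _; case: ifP => // _; rewrite mulr_ge0 ?divr_ge0 // ltW.
  have k0 : (0 : R) < k%:R.
    apply: lt_le_trans hk1; exact: divr_gt0.
  have -> : (2 ^ (j - r) <= k < 2 ^ (j + r + 1))%N.
    apply/andP; split.
      rewrite -(ler_nat R); apply: le_trans hk1.
      rewrite ler_pdivlMr // natrX.
      apply: le_trans (_ : (2:R) ^+ (j - r) * 2 ^+ r <= _).
        by rewrite ler_wpM2l ?exprn_ge0 // -natrX.
      by rewrite -exprD subnK // -natrX ler_nat.
    rewrite -(ltr_nat R); apply: le_lt_trans hk2 _.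
    have -> : (2 ^ (j + r + 1))%N = (2 ^ r * 2 ^ j.+1)%N by rewrite -expnD; congr (_ ^ _)%N; lia.
    rewrite natrM; apply: le_lt_trans (_ : (2 ^ r)%:R * n%:R < _).
      by rewrite ler_wpM2r // ltW.
    by rewrite ltr_pM2l ?ltr_nat // ltr0n expn_gt0.
  rewrite ler_pdivrMr // mulrAC -{1}(mul1r `|a k|) ler_wpM2r //.
  by rewrite mulrAC ler_pdivlMr // mul1r mulrC -ler_pdivrMr.
have h1 : (0 <= 2^(j-r))%N by [].
have h2 : (2^(j-r) <= 2^(j+r+1))%N by rewrite leq_exp2l //; lia.
have h3 : (2^(j+r+1) <= X)%N by rewrite /X; lia.
rewrite (big_cat_nat h1 (leq_trans h2 h3)) /= (big_cat_nat h2 h3) /=.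
rewrite big1_seq ?add0r; last first.
  move=> i /andP[_]; rewrite mem_index_iota => /andP[_ hi].
  by rewrite /g ifF //; apply/negbTE; apply/negP => /andP[hh hh2]; lia.
rewrite [X in _ + X]big1_seq ?addr0; last first.
  move=> i /andP[_]; rewrite mem_index_iota => /andP[hi _].
  by rewrite /g ifF //; apply/negbTE; apply/negP => /andP[hh hh2]; lia.
rewrite /UU mulr_sumr le_eqVlt; apply/orP; left; apply/eqP.
apply: eq_big_nat => i hi; by rewrite /g hi.
Qed.

Ltac clr := repeat match goal with
  | H : ?T |- _ => lazymatch T with
                  | is_true (leq _ _) => fail
                  | @eq nat _ _ => fail
                  | _ => clear H
                  end
  end.
Ltac nlia := clr; lia.

Unset Implicit Arguments.
Set Strict Implicit.

Theorem mainTheorem6 (R : realType) (a : R ^nat) :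
  GMS a -> cvg (series a @ \oo) ->
  (fun n : nat => n%:R * a n) @ \oo --> (0 : R).
Proof.
move=> [a0 [C [lam [C1 [l1 hG]]]]] /cvg_ex [l hl].
have C0 : 0 < C by apply: lt_trans C1.
have l0 : 0 < lam by apply: lt_trans l1.
pose K := C * lam.
have K0 : 0 < K by rewrite mulr_gt0.
pose r := (Num.truncn lam).+1.
have lr : lam <= (2 ^ r)%:R.
  apply: le_trans (ltW (truncnS_gt lam)) _.
  by rewrite ler_nat ltnW // ltn_expl.
clearbody r.
have hV : forall n j, (r <= j)%N -> (2 ^ j <= n)%N -> (n < 2 ^ j.+1)%N ->
    DV a n (2 * n).+1 <= K / n%:R * UU a (2 ^ (j - r))%N (2 ^ (j + r + 1))%N.
  move=> n j rj jn nj.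
  have n0 : (0 < n)%N by apply: leq_trans jn; rewrite expn_gt0.
  apply: le_trans (hG n n0) _.
  rewrite /K -!mulrA ler_pM2l // mulrA.
  exact: gm_bound.
pose h := r.+1.
pose E : R := (4 ^ h)%:R.
have E0 : 0 < E by rewrite ltr0n expn_gt0.
pose s := (Num.truncn (4 * K * (2 * r.+1)%:R * E)).+1.
pose P2s : R := (2 ^ s)%:R.
have P2s0 : 0 < P2s by rewrite ltr0n expn_gt0.
have hs : 4 * K * (2 * r.+1)%:R * E <= P2s.
  apply: le_trans (ltW (truncnS_gt _)) _.
  by rewrite ler_nat ltnW // ltn_expl.
clearbody s.
pose kap := 2 * K / P2s.
pose D := kap * (2 * r.+1)%:R.
have D0 : 0 <= D by rewrite mulr_ge0 // divr_ge0 // ?mulr_ge0 // ltW.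
have DE : D * E <= 2^-1.
  have P2n : P2s != 0 by rewrite gt_eqF.
  rewrite (_ : D * E = (4*K*(2*r.+1)%:R*E) / P2s * 2^-1); last by rewrite /D /kap; field.
  rewrite -{2}(mul1r 2^-1) ler_pM2r ?invr_gt0 // ler_pdivrMr // mul1r.
  exact: hs.
have D2 : D <= 2^-1.
  apply: le_trans DE; rewrite -{1}(mulr1 D) ler_wpM2l // ler1n expn_gt0 //.
apply/cvgr0Pnorm_le => e e0.
pose Q := 1 + 3 * K * (2 * r + 1)%:R * P2s.
have Q0 : 0 < Q by rewrite ltr_wpDr // mulr_ge0 // ?mulr_ge0 // ltW.
pose eps := e / Q.
have eps0 : 0 < eps by rewrite divr_gt0.
pose A := P2s * eps.
have A0 : 0 < A by rewrite mulr_gt0.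
have [N1 hN1] : exists N, forall m L, (N <= m)%N -> `|\sum_(m <= k < m + L) a k| <= eps.
  move/cvgrPdist_le: hl => /(_ (eps / 2)) [|N _ HN]; first by rewrite divr_gt0.
  exists N => m L hm.
  have e1 := HN m hm.
  have e2 := HN (m + L)%N (leq_trans hm (leq_addr _ _)).
  have -> : \sum_(m <= k < m + L) a k = series a (m + L)%N - series a m.
    rewrite /series /= (big_cat_nat (leq0n m) (leq_addr L m)) /=; ring.
  have -> : series a (m + L)%N - series a m = (l - series a m) - (l - series a (m + L)%N) by ring.
  apply: le_trans (ler_normB _ _) _.
  by rewrite (splitr eps) lerD.
have [N2 hN2] : exists N, forall k, (N <= k)%N -> `|a k| <= 1.
  move/cvgr0Pnorm_le: a0 => /(_ 1 ltr01) [N _ HN]; exists N => k hk; exact: HN.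
pose J0 := (s + r + N1 + N2)%N.
have hJ0 : forall j, (J0 <= j)%N ->
    [/\ (s <= j)%N, (r <= j)%N, (N1 <= 2 ^ j)%N & (N2 <= 2 ^ j)%N].
  move=> j hj; have := ltn_expl j (isT : (1 < 2)%N); move: hj; rewrite /J0.
  move: (2 ^ j)%N (s) (r) (N1) (N2) => P s' r' n1 n2 hj hP; split; nlia.
have kap0 : 0 <= kap by rewrite divr_ge0 ?mulr_ge0 // ltW.
have hrec : forall j, (J0 <= j)%N ->
    ud a j <= A + kap * UU a (2 ^ (j - r))%N (2 ^ (j + r + 2))%N.
  move=> j /hJ0 [sj rj N1j N2j].
  pose L := (2 ^ (j - s))%N.
  have L0 : (0 < L)%N by rewrite expn_gt0.
  have ej : (2 ^ j = L * 2 ^ s)%N by rewrite -expnD subnK.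
  have ej1 : (2 ^ j.+1 = 2 ^ j + 2 ^ j)%N by rewrite expnS mul2n addnn.
  have Lj : (L <= 2 ^ j)%N by rewrite ej leq_pmulr // expn_gt0.
  have hb := @block R a eps (2 ^ j)%N (2 ^ j)%N L L0.
  rewrite /ud ej1; apply: le_trans (hb _) _.
    move=> m hm; apply: hN1; exact: leq_trans N1j hm.
  have Lr0 : (L%:R : R) != 0 by rewrite pnatr_eq0 -lt0n.
  apply: lerD.
    rewrite [X in X%:R * _ / _]ej natrM /A /P2s.
    by rewrite le_eqVlt; apply/orP; left; apply/eqP; field.
  rewrite (@DV_split R a (2 ^ j)%N (2 ^ j + 2 ^ j)%N); [|nlia|nlia].
  have j0 : (0 : R) < (2 ^ j)%:R by rewrite ltr0n expn_gt0.
  have W1 : DV a (2 ^ j)%N (2 ^ j + 2 ^ j)%N <= K / (2 ^ j)%:R * UU a (2 ^ (j - r))%N (2 ^ (j + r + 2))%N.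
    apply: le_trans (_ : DV a (2 ^ j)%N (2 * 2 ^ j).+1 <= _).
      apply: DV_mono; nlia.
    apply: le_trans (hV _ j rj (leqnn _) _) _; first by rewrite ltn_exp2l.
    apply: ler_wpM2l; first by rewrite divr_ge0 // ltW.
    apply: UU_mono => //.
    by rewrite leq_exp2l //; nlia.
  have W2 : DV a (2 ^ j + 2 ^ j)%N (2 ^ j + 2 ^ j + L)%N <= K / (2 ^ j)%:R * UU a (2 ^ (j - r))%N (2 ^ (j + r + 2))%N.
    rewrite -ej1.
    apply: le_trans (_ : DV a (2 ^ j.+1)%N (2 * 2 ^ j.+1).+1 <= _).
      apply: DV_mono; rewrite ?ej1; nlia.
    apply: le_trans (hV _ j.+1 (leqW rj) (leqnn _) _) _; first by rewrite ltn_exp2l.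
    apply: ler_pM.
    - by rewrite divr_ge0 // ltW.
    - exact: UU_ge0.
    - rewrite ler_pM2l // lef_pV2 ?posrE ?ltr0n ?expn_gt0 // ler_nat leq_exp2l //.
    - apply: UU_mono; rewrite leq_exp2l //; nlia.
  apply: le_trans (_ : L%:R * (2 * (K / (2 ^ j)%:R * UU a (2 ^ (j - r))%N (2 ^ (j + r + 2))%N)) <= _).
    rewrite ler_wpM2l ?ler0n // mulr2n mulrDl mul1r.
    exact: lerD.
  rewrite le_eqVlt; apply/orP; left; apply/eqP.
  rewrite /kap /P2s ej natrM; field.
  by rewrite Lr0 andbT pnatr_eq0 expn_eq0.
have hind : forall t j, (J0 + t * h <= j)%N ->
    ud a j <= 2 * A + D ^+ t * (2 ^ (j + t * h))%:R.
  elim=> [|t IH] j hj.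
    have [_ _ _ N2j] := hJ0 j (leq_trans (leq_addr _ _) hj).
    rewrite mul0n addn0 expr0 mul1r.
    apply: le_trans (_ : ud a j <= (2 ^ j)%:R) _; last by rewrite lerDr mulr_ge0 // ltW.
    rewrite /ud /UU; apply: le_trans (_ : \sum_(2 ^ j <= i < 2 ^ j.+1) (1:R) <= _).
      apply: ler_sum_nat => i /andP[hi _]; apply: hN2; exact: leq_trans N2j hi.
    by rewrite sumr_const_nat expnS mul2n -addnn addnK.
  have hj' : (J0 <= j)%N by nlia.
  have [_ rj _ _] := hJ0 j hj'.
  apply: le_trans (hrec j hj') _.
  rewrite (_ : (2 ^ (j + r + 2) = 2 ^ ((j - r) + (2 * r.+1)))%N); last by congr (_ ^ _)%N; nlia.
  rewrite UU_dyadic.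
  apply: le_trans (_ : A + kap * ((2 * r.+1)%:R * (2 * A + D ^+ t * (2 ^ (j + t.+1 * h))%:R)) <= _).
    rewrite lerD2l; apply: ler_wpM2l => //.
    rewrite -[X in X%:R * _](_ : ((j - r) + 2 * r.+1 - (j - r))%N = (2 * r.+1)%N); last by nlia.
    rewrite mulr_natl -sumr_const_nat; apply: ler_sum_nat => i /andP[hi1 hi2].
    apply: le_trans (IH i _) _; first by nlia.
    rewrite lerD2l ler_wpM2l ?exprn_ge0 // ler_nat leq_exp2l //; nlia.
  rewrite mulrA -/D exprS mulrDr -mulrA addrA lerD2r.
  have := ler_wpM2r (ltW A0) D2.
  lra.
pose Z0 : R := (2 ^ (J0 + 2 * r + h))%:R.
have [T hT] : exists T : nat, Z0 < A * (2 ^ T)%:R.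
  exists (Num.truncn (A^-1 * Z0)).+1.
  rewrite -ltr_pdivrMl //; apply: lt_le_trans (truncnS_gt _) _.
  by rewrite ler_nat ltnW // ltn_expl.
exists (2 ^ (J0 + r + T * h))%N => // n hn /=.
have n0 : (0 < n)%N by apply: leq_trans hn; rewrite expn_gt0.
have := trunc_log_bounds (isT : (1 < 2)%N) n0.
move: (trunc_log 2 n) => j /andP[jn nj].
have hjK : (J0 + r + T * h <= j)%N.
  rewrite leqNgt; apply/negP => hlt.
  have : (2 ^ j.+1 <= 2 ^ (J0 + r + T * h))%N by rewrite leq_exp2l.
  move=> H; have := leq_trans nj (leq_trans H hn); by rewrite ltnn.
have [sj rj N1j N2j] := hJ0 j (leq_trans (leq_addr _ _) (leq_trans (leq_addr _ _) hjK)).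
pose t := ((j - r - J0) %/ h)%N.
have h0 : (0 < h)%N by [].
have t1 : (t * h <= j - r - J0)%N := leq_trunc_div _ _.
have t2 : (j - r - J0 < t.+1 * h)%N := ltn_ceil _ h0.
have tT : (T <= t)%N.
  rewrite -(mulnK T h0) leq_div2r //; nlia.
have hu : forall i, (j - r <= i)%N -> (i <= j + r)%N -> ud a i <= 3 * A.
  move=> i hi1 hi2.
  apply: le_trans (hind t i _) _; first by nlia.
  suff : D ^+ t * (2 ^ (i + t * h))%:R <= A by lra.
  apply: le_trans (_ : D ^+ t * (Z0 * E ^+ t) <= _).
    apply: ler_wpM2l; first exact: exprn_ge0.
    rewrite /Z0 /E -natrX -natrM ler_nat -expnM.
    rewrite (_ : (4 ^ (h * t))%N = (2 ^ (2 * (h * t)))%N); last by rewrite (expnM 2 2).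
    rewrite -expnD leq_exp2l //; nlia.
  rewrite mulrCA -exprMn.
  apply: le_trans (_ : Z0 * (2^-1) ^+ T <= _).
    rewrite ler_wpM2l ?ler0n //.
    apply: le_trans (_ : (2^-1) ^+ t <= _).
      apply: lerXn2r.
      - by rewrite nnegrE mulr_ge0 // ltW.
      - by rewrite nnegrE invr_ge0 ler0n.
      - exact: DE.
    have hh : (0:R) <= 2^-1 by rewrite invr_ge0 ler0n.
    have hh1 : (2:R)^-1 <= 1 by rewrite invf_le1 ?ler1n // ltr0n.
    exact: (@ler_wiXn2l R (2^-1) hh hh1 t T tT).
  rewrite exprVn -natrX ler_pdivrMr ?ltr0n ?expn_gt0 //.
  exact: ltW.
rewrite normrM normr_nat.
apply: le_trans (ptwise a n n0) _.
have c1 := hN1 n n (leq_trans N1j jn).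
have c3 : UU a (2 ^ (j - r))%N (2 ^ (j + r + 1))%N <= (2 * r + 1)%:R * (3 * A).
  rewrite (_ : (2 ^ (j + r + 1) = 2 ^ ((j - r) + (2 * r + 1)))%N); last by congr (_ ^ _)%N; nlia.
  rewrite UU_dyadic -[X in X%:R * _](_ : ((j - r) + (2 * r + 1) - (j - r))%N = (2 * r + 1)%N); last by nlia.
  rewrite mulr_natl -sumr_const_nat; apply: ler_sum_nat => i /andP[hi1 hi2].
  apply: hu; nlia.
have n0r : (n%:R : R) != 0 by rewrite pnatr_eq0 -lt0n.
have c2 : n%:R * DV a n (n + n)%N <= K * ((2 * r + 1)%:R * (3 * A)).
  apply: le_trans (_ : n%:R * DV a n (2 * n).+1 <= _).
    by rewrite ler_wpM2l ?ler0n //; apply: DV_mono; nlia.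
  apply: le_trans (ler_wpM2l (ler0n _ _) (hV n j rj jn nj)) _.
  rewrite (_ : n%:R * (K / n%:R * UU a (2 ^ (j - r))%N (2 ^ (j + r + 1))%N) = K * UU a (2 ^ (j - r))%N (2 ^ (j + r + 1))%N); last by field.
  by rewrite ler_wpM2l // ltW.
apply: le_trans (lerD c1 c2) _.
have Qn : Q != 0 by rewrite gt_eqF.
rewrite le_eqVlt; apply/orP; left; apply/eqP.
have q1 : 0 <= 2 * r%:R + 1 :> R by rewrite addr_ge0 // mulr_ge0 // ler0n.
have K0' : 0 <= K by exact: ltW.
rewrite /A /eps /Q; field.
rewrite gt_eqF //; apply: lt_le_trans ltr01 _; rewrite lerDl !mulr_ge0 // ?ler0n. all: exact: ltW.
Qed.
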